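(* Let $n\geq 6$ be an integer, $K$ a field, $R=K[x_1,\dots,x_n]$, and let $I_n$ be the ideal of $R$ generated by the monomials $x_1x_3,\dots,x_1x_{n-1}$; $x_2x_4,\dots,x_2x_n$; $x_3x_5,\dots,x_3x_n$; $x_4x_n,\dots,x_{n-2}x_n$. Let $B=(b_{ij})_{i,j=1,\dots,n-3}$ be the matrix defined by: $b_{jj}=x_1$ for $j=1,\dots,n-4$ and $b_{n-3,n-3}=x_3$; $b_{j+1,j}=x_2$ for $j=1,\dots,n-4$; $b_{ij}=0$ if $i\geq j+2$; $b_{j-1,j}=x_3x_{3+j}$ for $j=2,\dots,n-4$; $b_{1,n-3}=x_2$ and $b_{i,n-3}=x_{2+i}$ for $i=2,\dots,n-4$; $b_{ij}=0$ if $j\geq i+2$ and $j\neq n-3$. Let $D=\det B-(-1)^n x_2^{n-3}$. Then: (a) $D\in I_n$; (b) $D-x_1^{n-4}x_3\in x_2\,(x_4,\dots,x_n)$, where $(x_4,\dots,x_n)$ is the ideal of $R$ generated by $x_4,\dots,x_n$. *)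

(* Defs.v *)
From HB Require Import structures.
From mathcomp Require Import all_boot all_order all_algebra.
From mathcomp Require Import mpoly.
Set Implicit Arguments. Unset Strict Implicit. Unset Printing Implicit Defensive.
Import GRing.Theory.
Local Open Scope ring_scope.

(* Polynomial ring R = K[x_1,...,x_n] is {mpoly K[n]}; the variable x_k
   (1-indexed, 1 <= k <= n) is 'X_(k-1). Out-of-range k gives 0 (never used). *)
Definition xv (K : fieldType) (n k : nat) : {mpoly K[n]} :=
  match @insub nat (fun m => m < n)%N _ k.-1 with
  | Some i => 'X_i
  | None => 0
  end.

Definition in_ideal (R : comNzRingType) (s : seq R) (p : R) : Prop :=
  exists c : 'I_(size s) -> R, p = \sum_(i < size s) c i * s`_i.

Definition In_gens (K : fieldType) (n : nat) : seq {mpoly K[n]} :=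
  [seq xv K n 1 * xv K n j | j <- iota 3 (n - 3)]
  ++ [seq xv K n 2 * xv K n j | j <- iota 4 (n - 3)]
  ++ [seq xv K n 3 * xv K n j | j <- iota 5 (n - 4)]
  ++ [seq xv K n i * xv K n n | i <- iota 4 (n - 5)].

Definition x4n_gens (K : fieldType) (n : nat) : seq {mpoly K[n]} :=
  [seq xv K n j | j <- iota 4 (n - 3)].

Definition Bentry (K : fieldType) (n i j : nat) : {mpoly K[n]} :=
  if j == (n - 3)%N then
    (if i == (n - 3)%N then xv K n 3
     else if i == 1%N then xv K n 2
     else xv K n (2 + i))
  else
    (if i == j then xv K n 1
     else if i == j.+1 then xv K n 2
     else if (i.+1 == j) && (2 <= j)%N then xv K n 3 * xv K n (3 + j)
     else 0).

Definition Bmat (K : fieldType) (n : nat) : 'M[{mpoly K[n]}]_(n - 3) :=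
  \matrix_(i < n - 3, j < n - 3) Bentry K n i.+1 j.+1.

Definition Dpoly (K : fieldType) (n : nat) : {mpoly K[n]} :=
  \det (Bmat K n) - (-1) ^+ n * xv K n 2 ^+ (n - 3).

(* Main.v *)
Require Import Defs.
From HB Require Import structures.
From mathcomp Require Import all_boot all_order all_algebra.
From mathcomp Require Import mpoly.
From mathcomp Require Import zify ring.
Import GRing.Theory.
Local Open Scope ring_scope.
Set Implicit Arguments. Unset Strict Implicit.

Section Gen.
Variable R : comNzRingType.

Lemma ii0 (s : seq R) : in_ideal s 0.
Proof. exists (fun _ => 0); by rewrite big1 // => i _; rewrite mul0r. Qed.

Lemma iiD (s : seq R) p q : in_ideal s p -> in_ideal s q -> in_ideal s (p + q).
Proof.
move=> [c1 ->] [c2 ->]; exists (fun i => c1 i + c2 i).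
by rewrite -big_split; apply: eq_bigr => i _; rewrite mulrDl.
Qed.

Lemma iiM (s : seq R) a p : in_ideal s p -> in_ideal s (a * p).
Proof.
move=> [c ->]; exists (fun i => a * c i).
by rewrite mulr_sumr; apply: eq_bigr => i _; rewrite mulrA.
Qed.

Lemma iiN (s : seq R) p : in_ideal s p -> in_ideal s (- p).
Proof. by move=> h; rewrite -mulN1r; apply: iiM. Qed.

Lemma iiB (s : seq R) p q : in_ideal s p -> in_ideal s q -> in_ideal s (p - q).
Proof. by move=> h1 h2; apply: iiD => //; apply: iiN. Qed.

Lemma iiMr (s : seq R) a p : in_ideal s p -> in_ideal s (p * a).
Proof. by rewrite mulrC; apply: iiM. Qed.

Lemma iimem (s : seq R) x : x \in s -> in_ideal s x.
Proof.
move=> xs; have hi : (index x s < size s)%N by rewrite index_mem.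
pose i0 : 'I_(size s) := Ordinal hi.
exists (fun i => if i == i0 then 1 else 0).
rewrite (bigD1 i0) //= eqxx mul1r big1 ?addr0; first by rewrite nth_index.
by move=> i /negbTE ->; rewrite mul0r.
Qed.

Lemma iisum (s : seq R) k (F : 'I_k -> R) :
  (forall i, in_ideal s (F i)) -> in_ideal s (\sum_(i < k) F i).
Proof.
move=> h; apply: (big_ind (in_ideal s)) => //; [exact: ii0 | exact: iiD].
Qed.

Lemma iimap (s t : seq R) a p : in_ideal s p ->
  (forall q, q \in s -> in_ideal t (a * q)) -> in_ideal t (a * p).
Proof.
move=> [c ->] h; rewrite mulr_sumr; apply: iisum => i.
rewrite mulrCA; apply: iiM; apply: h; exact: mem_nth.
Qed.

Definition dm (k : nat) (h : nat -> nat -> R) : R :=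
  \det (\matrix_(i < k, j < k) h i j).

Lemma dm_ext k h h' : (forall a b, (a < k)%N -> (b < k)%N -> h a b = h' a b) ->
  dm k h = dm k h'.
Proof.
move=> e; rewrite /dm; congr (\det _); apply/matrixP => a b; rewrite !mxE; exact: e.
Qed.

Lemma bump_lt (k a : nat) : (a < k)%N -> bump k a = a.
Proof. by move=> h; rewrite /bump leqNgt h. Qed.

Lemma dm_row k h : dm k.+1 h =
  \sum_(j < k.+1) h k j * ((-1) ^+ (k + j) * dm k (fun a b => h a (bump j b))).
Proof.
rewrite /dm (expand_det_row _ ord_max); apply: eq_bigr => j _.
rewrite mxE /cofactor; congr (_ * (_ * \det _)).
by apply/matrixP => a b; rewrite !mxE /= bump_lt.
Qed.

Lemma dm_col k h : dm k.+1 h =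
  \sum_(i < k.+1) h i k * ((-1) ^+ (i + k) * dm k (fun a b => h (bump i a) b)).
Proof.
rewrite /dm (expand_det_col _ ord_max); apply: eq_bigr => i _.
rewrite mxE /cofactor; congr (_ * (_ * \det _)).
by apply/matrixP => a b; rewrite !mxE /= (@bump_lt k b).

Qed.

Lemma sgn_even k : (-1) ^+ (k + k) = 1 :> R.
Proof. by rewrite -signr_odd addnn odd_double. Qed.

Lemma sgn_odd k : (-1) ^+ (k.+1 + k) = -1 :> R.
Proof. by rewrite addSn exprS sgn_even mulr1. Qed.

Lemma sgn_odd' k : (-1) ^+ (k + k.+1) = -1 :> R.
Proof. by rewrite addnS exprS sgn_even mulr1. Qed.

Lemma dm0 h : dm 0 h = 1.
Proof. by rewrite /dm det_mx00. Qed.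

Lemma dm_last_single k h : (forall j, (j < k)%N -> h k j = 0) ->
  dm k.+1 h = h k k * dm k h.
Proof.
move=> z; rewrite dm_row big_ord_recr /= big1 ?add0r.
  rewrite sgn_even mul1r; congr (_ * _); apply: dm_ext => a b _ hb.
  by rewrite bump_lt.
by move=> j _; rewrite z ?mul0r.
Qed.

Lemma dm_row2 k h : (forall j, (j < k)%N -> h k.+1 j = 0) ->
  dm k.+2 h = h k.+1 k.+1 * dm k.+1 h
              - h k.+1 k * dm k.+1 (fun a b => h a (bump k b)).
Proof.
move=> z; rewrite dm_row !big_ord_recr /= big1 ?add0r.
  rewrite sgn_even sgn_odd mul1r mulN1r mulrN addrC.
  congr (_ * _ - _); apply: dm_ext => a b _ hb; by rewrite bump_lt.
by move=> j _; rewrite z ?mul0r.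
Qed.

Lemma dm_col2 k h : (forall i, (i < k)%N -> h i k.+1 = 0) ->
  dm k.+2 h = h k.+1 k.+1 * dm k.+1 h
              - h k k.+1 * dm k.+1 (fun a b => h (bump k a) b).
Proof.
move=> z; rewrite dm_col !big_ord_recr /= big1 ?add0r.
  rewrite sgn_even sgn_odd' mul1r mulN1r mulrN addrC.
  congr (_ * _ - _); apply: dm_ext => a b ha _; by rewrite bump_lt.
by move=> i _; rewrite z ?mul0r.
Qed.

End Gen.

Section Spec.
Variables (K : fieldType) (p : nat).
Local Notation x := (xv K p.+3.+3).
Local Notation I := (In_gens K p.+3.+3).
Local Notation J := (x4n_gens K p.+3.+3).
Local Notation RR := {mpoly K[p.+3.+3]}.

Definition F a b := Bentry K p.+3.+3 a.+1 b.+1.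

Lemma n3 : (p.+3.+3 - 3 = p.+3)%N. Proof. by []. Qed.

Lemma F_last a : F a p.+2 = if a == p.+2 then x 3 else if a == 0%N then x 2 else x (2 + a.+1).
Proof. by rewrite /F /Bentry n3 eqxx. Qed.

Lemma F_diag b : (b < p.+2)%N -> F b b = x 1.
Proof. move=> h; rewrite /F /Bentry n3 eqxx ifN //; apply/eqP; lia. Qed.

Lemma F_sub b : (b < p.+2)%N -> F b.+1 b = x 2.
Proof.
move=> h; rewrite /F /Bentry n3 eqxx ifN; last by apply/eqP; lia.
by rewrite ifN //; apply/eqP; lia.
Qed.

Lemma F_sup a : (a.+1 < p.+2)%N -> F a a.+1 = x 3 * x (a + 5).
Proof.
move=> h; rewrite /F /Bentry n3 ifN; last by apply/eqP; lia.
rewrite ifN; last by apply/eqP; lia.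
rewrite ifN; last by apply/eqP; lia.
rewrite eqxx /= (_ : (3 + a.+2 = a + 5)%N) //; lia.
Qed.

Lemma F_zero a b : (b < p.+2)%N -> a <> b -> a <> b.+1 -> a.+1 <> b -> F a b = 0.
Proof.
move=> h h1 h2 h3; rewrite /F /Bentry n3 ifN; last by apply/eqP; lia.
rewrite ifN; last by apply/eqP; lia.
rewrite ifN; last by apply/eqP; lia.
rewrite ifN //; apply/negP => /andP [/eqP ? _]; lia.
Qed.

Lemma gen13 : in_ideal I (x 1 * x 3).
Proof.
apply: iimem; rewrite /In_gens mem_cat; apply/orP; left.
apply/mapP; exists 3%N => //; rewrite mem_iota; lia.
Qed.

Lemma gen2 j : (4 <= j <= p.+3.+3)%N -> in_ideal I (x 2 * x j).
Proof.
move=> hj; apply: iimem; rewrite /In_gens !mem_cat; apply/orP; right; apply/orP; left.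
apply/mapP; exists j => //; rewrite mem_iota; lia.
Qed.

Lemma genJ j : (4 <= j <= p.+3.+3)%N -> in_ideal J (x j).
Proof.
move=> hj; apply: iimem; rewrite /x4n_gens.
apply/mapP; exists j => //; rewrite mem_iota; lia.
Qed.

Lemma x2J G : in_ideal J G -> in_ideal I (x 2 * G).
Proof.
move=> hG; apply: (@iimap _ J I (x 2) G hG) => q /mapP [j]; rewrite mem_iota => hj ->.
apply: gen2; lia.
Qed.

Definition P k := dm k F.
Definition A k := dm k.+1 (fun a b => F a (if b == k then p.+2 else b)).

Lemma P1 : P 1 = x 1.
Proof. by rewrite /P dm_last_single // dm0 mulr1 F_diag. Qed.

Lemma Prec k : (k.+2 <= p.+2)%N ->
  exists h, P k.+2 = x 1 * P k.+1 + x 2 * (x 3 * x (k + 5) * h).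
Proof.
move=> hk; rewrite /P dm_col2; last by move=> i hi; apply: F_zero; lia.
rewrite F_diag // F_sup //.
rewrite (@dm_last_single _ k (fun a b => F (bump k a) b)); last first.
  move=> j hj /=; rewrite /bump leqnn add1n; apply: F_zero; lia.
rewrite /bump leqnn add1n F_sub; last by lia.
exists (- dm k (fun a b => F (bump k a) b)); rewrite /bump; ring.
Qed.

Lemma Pprop k : (k.+1 <= p.+2)%N ->
  exists H, in_ideal J H /\ P k.+1 = x 1 ^+ k.+1 + x 2 * H.
Proof.
elim: k => [|k IH] hk.
  by exists 0; split; [exact: ii0 | rewrite P1 mulr0 addr0 expr1].
have [H [hH eH]] := IH (ltnW hk).
have [h eh] := Prec hk.
exists (x 1 * H + x 3 * x (k + 5) * h); split.
  apply: iiD; first exact: iiM.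
  apply: iiMr; apply: iiM; apply: genJ; lia.
rewrite eh eH !exprS; move: (x 1) (x 2) (x 3) (x (k + 5)) => a b c d; ring.
Qed.

Lemma A0 : A 0 = x 2.
Proof. by rewrite /A dm_last_single // dm0 mulr1 /= F_last. Qed.

Lemma Arec k : (k.+1 <= p.+2)%N -> A k.+1 = F k.+1 p.+2 * P k.+1 - x 2 * A k.
Proof.
move=> hk.
have e1 : dm k.+1 (fun a b => F a (if b == k.+1 then p.+2 else b)) = P k.+1.
  apply: dm_ext => a b _ hb; rewrite ifN //; apply/eqP; lia.
have e2 : dm k.+1 (fun a b => (fun a b => F a (if b == k.+1 then p.+2 else b)) a (bump k b)) = A k.
  apply: dm_ext => a b _ hb; rewrite /bump /=.
  case: (ltngtP k b) => hkb.
  - lia.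
  - rewrite /= ?add0n; case: eqP => // ?; lia.
  - by rewrite -hkb ?leqnn ?add1n !eqxx.
have e3 := @dm_row2 _ k (fun a b => F a (if b == k.+1 then p.+2 else b)).
rewrite /A e3; last first.
  move=> j hj /=; rewrite ifN; last by apply/eqP; lia.
  apply: F_zero; lia.
rewrite e1 e2 /= eqxx.
have -> : (k == k.+1) = false by apply/eqP; lia.
by rewrite F_sub //; lia.
Qed.

Lemma Aprop k : (k <= p.+1)%N ->
  exists G, in_ideal J G /\ A k = (-1) ^+ k * x 2 ^+ k.+1 + G.
Proof.
elim: k => [|k IH] hk.
  by exists 0; split; [exact: ii0 | rewrite A0 addr0 expr0 mul1r expr1].
have [G [hG eG]] := IH (ltnW hk).
have [H [hH eH]] := Pprop (ltnW hk).
rewrite Arec; last by lia.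
rewrite F_last.
have -> : (k.+1 == p.+2) = false by apply/eqP; lia.
rewrite /=.
exists (x (2 + k.+2) * P k.+1 - x 2 * G); split.
  apply: iiB; last exact: iiM.
  apply: iiMr; apply: genJ; lia.
rewrite eG !exprS; move: (x 2) (x (2 + k.+2)) (P k.+1) ((-1) ^+ k : RR) (x 2 ^+ k) => a b c s t; ring.
Qed.

Lemma detB : \det (Bmat K p.+3.+3) = x 3 * P p.+2 - x 2 * A p.+1.
Proof.
have -> : \det (Bmat K p.+3.+3) = dm p.+3 F by [].
have -> : dm p.+3 F = A p.+2.
  apply: dm_ext => a b _ hb; case: eqP => [->|] //.
rewrite Arec // F_last eqxx //.
Qed.

End Spec.

Theorem lemma2p1 (K : fieldType) (n : nat) (hn : (6 <= n)%N) :
  in_ideal (In_gens K n) (Dpoly K n) /\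
  exists f : {mpoly K[n]}, in_ideal (x4n_gens K n) f /\
    Dpoly K n - xv K n 1 ^+ (n - 4) * xv K n 3 = xv K n 2 * f.
Proof.
have [p ->] : exists p, n = p.+3.+3 by exists (n - 6)%N; lia.
have [G [hG eG]] := Aprop K (leqnn p.+1).
have eD : Dpoly K p.+3.+3 = xv K p.+3.+3 3 * P K p p.+2 - xv K p.+3.+3 2 * G.
  rewrite /Dpoly detB eG.
  have -> : (p.+3.+3 - 3 = p.+3)%N by [].
  rewrite !exprS.
  move: (xv K p.+3.+3 3) (xv K p.+3.+3 2) (P K p p.+2) ((-1) ^+ p : {mpoly K[p.+3.+3]}) (xv K p.+3.+3 2 ^+ p) => a b c s t.
  ring.
split.
  rewrite eD; apply: iiB; last exact: x2J.
  have [h eh] := Prec K (leqnn p.+2).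
  rewrite eh.
  have -> : forall a b c d e : {mpoly K[p.+3.+3]}, c * (a * b + d * e) = (a * c) * b + e * (d * c).
    by move=> a b c d e; ring.
  apply: iiD; first by apply: iiMr; exact: gen13.
  have -> : forall a b c d e : {mpoly K[p.+3.+3]}, a * b * c * (d * e) = (d * b) * (a * c * e).
    by move=> a b c d e; ring.
  apply: iiMr; apply: gen2; lia.
have [H [hH eH]] := Pprop K (leqnn p.+2).
exists (xv K p.+3.+3 3 * H - G); split.
  by apply: iiB => //; apply: iiM.
rewrite eD eH.
have -> : (p.+3.+3 - 4 = p.+2)%N by [].
move: (xv K p.+3.+3 3) (xv K p.+3.+3 2) (xv K p.+3.+3 1 ^+ p.+2) => a b c.
ring.
Qed.
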